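(* Let $A,B$ be finite nonempty subsets of an abelian group $\mathbf G$ and let $k\ge1$ be an integer. Suppose $|A-A|\le K|A|$ and $\mathsf E_{2k+2}(A)=M|A|^{2k+3}/K^{2k+1}$ for some $K,M>0$. Then there exist a set $T\subseteq A-A$ with $|T|\ge K|A|/(16M)$ and an element $u\in\mathbf G$ such that for every $t\in T+u$, $$\sum_{x\in\mathbf G}\big|(A*B)(x)-(A*B)(x+t)\big|^2\le 32|A|^2|B|/k.$$
   Context: Sets are identified with their indicator functions; $(A*B)(x)=\sum_{y}A(y)B(x-y)$. $(A\circ A)(x)=|\{(a,b)\in A^2:b-a=x\}|$ and $\mathsf E_j(A)=\sum_x(A\circ A)(x)^j$. *)

(* Defs.v *)
From HB Require Import structures.
From mathcomp Require Import all_boot all_order all_algebra.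
From mathcomp Require Import finmap.
Set Implicit Arguments. Unset Strict Implicit. Unset Printing Implicit Defensive.
Import Order.TTheory GRing.Theory Num.Theory.
Local Open Scope fset_scope.
Local Open Scope ring_scope.

Section Additive.
Variable G : zmodType.

Definition sumset (A B : {fset G}) : {fset G} := [fset a + b | a in A, b in B].
Definition diffset (A : {fset G}) : {fset G} := [fset a - b | a in A, b in A].

(* (A * B)(x) = sum_y A(y) B(x - y) = #{ y in A : x - y in B } *)
Definition conv (A B : {fset G}) (x : G) : nat :=
  #|` [fset y in A | x - y \in B] |.

Definition dcorr (A : {fset G}) (x : G) : nat :=
  #|` [fset p in A `*` A | p.2 - p.1 == x] |.

(* E_j(A) = sum_x (A o A)(x)^j ; the summand vanishes outside A - A for j >= 1 *)
Definition energy (j : nat) (A : {fset G}) : nat :=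
  (\sum_(x <- diffset A) (dcorr A x) ^ j)%N.

(* sum_{x in G} |(A*B)(x) - (A*B)(x+t)|^2 ; the summand vanishes outside
   (A+B) \cup ((A+B) - t), so the sum is taken over that finite set *)
Definition shift_sq (R : numDomainType) (A B : {fset G}) (t : G) : R :=
  \sum_(x <- sumset A B `|` [fset z - t | z in sumset A B])
     `| (conv A B x)%:R - (conv A B (x + t))%:R | ^+ 2.
End Additive.

(* Main.v *)
Require Import Defs.
From HB Require Import structures.
From mathcomp Require Import all_boot all_order all_algebra.
From mathcomp Require Import finmap.
From mathcomp Require Import ring lra zify.
Import Order.TTheory GRing.Theory Num.Theory.
Set Implicit Arguments. Unset Strict Implicit. Unset Printing Implicit Defensive.
Local Open Scope fset_scope.
Local Open Scope ring_scope.

Lemma sum_eq1 (G : choiceType) (s : seq G) c : uniq s -> (\sum_(z <- s) ((z == c) : nat))%N = (c \in s).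
Proof.
move=> us; rewrite -count_uniq_mem // -sum1_count [RHS]big_mkcond /=.
by apply: eq_bigr => z _; rewrite eq_sym; case: (c == z).
Qed.

Section Basics.
Variable G : zmodType.
Implicit Types (A B D : {fset G}).

Lemma card_sep (T : choiceType) (D : {fset T}) (P : pred T) : #|` [fset y in D | P y]| = (\sum_(y <- D) (P y : nat))%N.
Proof. by rewrite card_fset_sum1 -big_fset_condE big_mkcond. Qed.

Lemma conv_sum A B x : conv A B x = (\sum_(y <- A) (((x - y)%R \in B) : nat))%N.
Proof. by rewrite /conv card_sep. Qed.

Lemma dcorr_sum A t : dcorr A t = (\sum_(y <- A) (((y + t)%R \in A) : nat))%N.
Proof.
rewrite /dcorr card_sep /fsetM big_imfset2 /=; last by move=> [a b] [c d] _ _ /= [-> ->].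
apply: eq_bigr => y _.
rewrite (eq_bigr (fun z => ((z == (y + t)%R) : nat))) ?sum_eq1 ?fset_uniq //.
by move=> z _ /=; rewrite subr_eq addrC.
Qed.
End Basics.

Section Shift.
Variables (G : zmodType) (R : realFieldType).

Lemma sum_pick (s : seq G) c (F : G -> R) : uniq s ->
  \sum_(y <- s) ((y == c)%:R * F y) = (c \in s)%:R * F c.
Proof.
move=> us.
rewrite (eq_bigr (fun y => ((y == c) : nat)%:R * F c)); last first.
  by move=> y _; case: eqP => [->|]; rewrite ?mul0r.
by rewrite -mulr_suml -natr_sum sum_eq1.
Qed.

Lemma sum_shift_le (D S : {fset G}) (t : G) (F : G -> R) :
  (forall y, 0 <= F y) -> (forall y, y \notin S -> F y = 0) ->
  \sum_(x <- D) F (x + t) <= \sum_(y <- S) F y.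
Proof.
move=> F0 FS.
have -> : \sum_(x <- D) F (x + t) = \sum_(x <- D) \sum_(y <- S) ((y == x + t)%:R * F y).
  apply: eq_bigr => x _; rewrite sum_pick ?fset_uniq //.
  by case: (boolP (x + t \in S)) => h; rewrite ?mul1r // FS // mulr0.
rewrite exchange_big /=; apply: ler_sum => y _.
rewrite -mulr_suml -natr_sum.
rewrite (eq_bigr (fun x => ((x == y - t) : nat))); last by move=> x _; rewrite -subr_eq [in LHS]eq_sym.
rewrite sum_eq1 ?fset_uniq //.
by case: (y - t \in D); rewrite ?mul1r ?mul0r.
Qed.

Lemma sum_sub_le (D S : {fset G}) (F : G -> R) :
  (forall y, 0 <= F y) -> (forall y, y \notin S -> F y = 0) ->
  \sum_(x <- D) F x <= \sum_(y <- S) F y.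
Proof.
move=> F0 FS; have := sum_shift_le D 0 F0 FS.
by under eq_bigr do rewrite addr0.
Qed.
End Shift.

Section CS.
Variable R : realFieldType.

Lemma CS (I : Type) (r : seq I) (x y : I -> R) :
  (\sum_(i <- r) x i * y i) ^+ 2 <= (\sum_(i <- r) x i ^+ 2) * (\sum_(i <- r) y i ^+ 2).
Proof.
have H i j : 2 * (x i * y i * (x j * y j)) <= x i ^+ 2 * y j ^+ 2 + x j ^+ 2 * y i ^+ 2.
  rewrite -subr_ge0.
  have -> : x i ^+ 2 * y j ^+ 2 + x j ^+ 2 * y i ^+ 2 - 2 * (x i * y i * (x j * y j))
     = (x i * y j - x j * y i) ^+ 2 by ring.
  exact: sqr_ge0.
rewrite -(@ler_pM2l _ 2) // expr2 big_distrlr /= mulr_sumr.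
have -> : 2 * ((\sum_(i <- r) x i ^+ 2) * (\sum_(i <- r) y i ^+ 2)) =
  \sum_(i <- r) \sum_(j <- r) (x i ^+ 2 * y j ^+ 2 + x j ^+ 2 * y i ^+ 2).
  rewrite mulr_natl mulr2n.
  under [RHS]eq_bigr do rewrite big_split /=.
  rewrite big_split /= big_distrlr /=; congr (_ + _).
  by rewrite exchange_big.
apply: ler_sum => i _; rewrite mulr_sumr; apply: ler_sum => j _; exact: H.
Qed.
End CS.

Section Tup.
Variable R : realFieldType.

Lemma sum_tup1 (I J : finType) (i : I) (h : J -> R) :
  \sum_(a : {ffun I -> J}) h (a i) = (\sum_y h y) * (#|J|%:R) ^+ #|I|.-1.
Proof.
pose F (l : I) (y : J) := if l == i then h y else 1.
have E a : h (a i) = \prod_l F l (a l).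
  rewrite (bigD1 i) //= /F eqxx big1 ?mulr1 // => l /negbTE ->; done.
under eq_bigr do rewrite E.
rewrite -bigA_distr_bigA (bigD1 i) //= /F eqxx; congr (_ * _).
rewrite (eq_bigr (fun _ => #|J|%:R)); last first.
  by move=> l /negbTE ->; rewrite sumr_const.
by rewrite prodr_const cardC1.
Qed.

Lemma sum_tup2 (I J : finType) (i i' : I) (h1 h2 : J -> R) :
  i != i' -> \sum_y h1 y = 0 -> \sum_(a : {ffun I -> J}) h1 (a i) * h2 (a i') = 0.
Proof.
move=> ii' h10.
pose F (l : I) (y : J) := if l == i then h1 y else if l == i' then h2 y else 1.
have E a : h1 (a i) * h2 (a i') = \prod_l F l (a l).
  have e1 : (i == i') = false by apply/negbTE.
  have e2 : (i' == i) = false by rewrite eq_sym e1.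
  rewrite (bigD1 i) //= (bigD1 i') /=; last by rewrite e2.
  rewrite /F !eqxx e2 /=.
  rewrite big1 ?mulr1 // => l /andP [/negbTE -> /negbTE ->]; done.
under eq_bigr do rewrite E.
by rewrite -bigA_distr_bigA (bigD1 i) //= /F eqxx h10 mul0r.
Qed.
End Tup.

Section Main.
Variables (G : zmodType) (R : realFieldType) (A B : {fset G}) (m : nat).

Definition nA := #|` A|.
Definition beta (x : G) : R := (x \in B)%:R.
Definition fA (x : G) : R := (conv A B x)%:R.
Definition Tup := {ffun 'I_m.+1 -> A}.
Definition gA (a : Tup) (x : G) : R :=
  (nA%:R / m.+1%:R) * \sum_i beta (x - val (a i)).
Definition S0 := sumset A B.
Definition err (a : Tup) : R := \sum_(x <- S0) (fA x - gA a x) ^+ 2.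

Lemma fA_sum x : fA x = \sum_(y : A) beta (x - val y).
Proof. by rewrite /fA conv_sum natr_sum big_seq_fsetE. Qed.

Lemma in_S0 y z : y \in A -> z \in B -> y + z \in S0.
Proof. by move=> yA zB; apply/imfset2P; exists y => //; exists z. Qed.

Lemma beta_supp x (y : A) : x \notin S0 -> beta (x - val y) = 0.
Proof.
move=> xS; rewrite /beta; case: (boolP (x - val y \in B)) => // h.
by move: xS; rewrite -[x](subrK (val y)) addrC in_S0 // fsvalP.
Qed.

Lemma fA_supp x : x \notin S0 -> fA x = 0.
Proof. by move=> xS; rewrite fA_sum big1 // => y _; rewrite beta_supp. Qed.

Lemma gA_supp a x : x \notin S0 -> gA a x = 0.
Proof. by move=> xS; rewrite /gA big1 ?mulr0 // => i _; rewrite beta_supp. Qed.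

Lemma cardA : #|{: A}| = nA.
Proof. by rewrite -cardfE. Qed.

Lemma sum_fA : \sum_(x <- S0) fA x = (nA * #|` B|)%:R.
Proof.
under eq_bigr do rewrite fA_sum.
rewrite exchange_big /= (eq_bigr (fun _ => (#|` B|)%:R)).
  by rewrite sumr_const cardA natrM mulr_natl.
move=> y _.
have -> : \sum_(x <- S0) beta (x - val y) = \sum_(x <- S0) \sum_(z <- B) ((x - val y == z) : nat)%:R.
  apply: eq_bigr => x _; rewrite -natr_sum /beta.
  rewrite (eq_bigr (fun z => ((z == x - val y) : nat))); last by move=> z _; rewrite eq_sym.
  by rewrite sum_eq1 ?fset_uniq.
rewrite exchange_big /= card_fset_sum1 natr_sum; apply: eq_big_seq => z zB.
rewrite -natr_sum (eq_bigr (fun x => ((x == z + val y) : nat))); last by move=> x _; rewrite subr_eq.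
by rewrite sum_eq1 ?fset_uniq // addrC in_S0 // ?fsvalP.
Qed.

Lemma fA_ge0 x : 0 <= fA x. Proof. exact: ler0n. Qed.

Lemma var_x x : \sum_(a : Tup) (fA x - gA a x) ^+ 2 <= nA%:R ^+ m.+2 * fA x / m.+1%:R.
Proof.
set j : R := m.+1%:R.
have j0 : j != 0 by rewrite pnatr_eq0.
have jp : 0 < j by rewrite ltr0n.
set c := nA%:R / j. set f := fA x.
have c0 : 0 <= c by rewrite divr_ge0 ?ler0n // ltW.
have f0 : 0 <= f by exact: fA_ge0.
pose z (y : A) := c * beta (x - val y) - f / j.
have Ez a : fA x - gA a x = - \sum_i z (a i).
  rewrite sumrB -mulr_sumr sumr_const card_ord /gA -/c -/f.
  have -> : (f / j) *+ m.+1 = f by rewrite -mulr_natr divfK.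
  by rewrite opprB.
have z0 : \sum_y z y = 0.
  rewrite sumrB -mulr_sumr -fA_sum sumr_const cardA -/f /c.
  rewrite -[f / j *+ _]mulr_natr. ring.
have zsq : \sum_y z y * z y <= c ^+ 2 * f.
  have -> : \sum_y z y * z y = \sum_y z y * (c * beta (x - val y)).
    transitivity (\sum_y z y * (c * beta (x - val y)) - (\sum_y z y) * (f / j));
      last by rewrite z0 mul0r subr0.
    rewrite mulr_suml -sumrB; apply: eq_bigr => y _; rewrite /z; ring.
  rewrite /f fA_sum mulr_sumr; apply: ler_sum => y _; rewrite /z /beta.
  case: (x - val y \in B); last by rewrite !mulr0 ?mul0r.
  have hpos : 0 <= f / j * c by rewrite mulr_ge0 ?divr_ge0 // ltW.
  rewrite -subr_ge0.
  have -> : c ^+ 2 * 1%:R - (c * 1%:R - f / j) * (c * 1%:R) = f / j * c by ring.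
  exact: hpos.
under eq_bigr do rewrite Ez sqrrN expr2 big_distrlr /=.
rewrite exchange_big /=.
have H : forall i : 'I_m.+1, \sum_(a : {ffun 'I_m.+1 -> A}) \sum_i' z (a i) * z (a i') = (\sum_y z y * z y) * nA%:R ^+ m.
  move=> i; rewrite exchange_big /= (bigD1 i) //= [X in _ + X]big1 ?addr0.
    by move: (sum_tup1 i (fun y => z y * z y)) => /= ->; rewrite cardA card_ord.
  by move=> i' ii'; apply: sum_tup2; rewrite // eq_sym.
under eq_bigr do rewrite H.
rewrite sumr_const card_ord.
apply: (@le_trans _ _ ((c ^+ 2 * f) * nA%:R ^+ m *+ m.+1)).
  by rewrite lerMn2r /= ler_wpM2r // exprn_ge0 // ler0n.
rewrite le_eqVlt; apply/orP; left; apply/eqP.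
rewrite /c -mulr_natr -/j !exprS; field; by rewrite addrC natr1 pnatr_eq0.
Qed.

Definition V : R := nA%:R ^+ 2 * (#|` B|)%:R / m.+1%:R.

Lemma err_ge0 a : 0 <= err a.
Proof. by apply: sumr_ge0 => x _; exact: sqr_ge0. Qed.

Lemma cardTup : #|{: Tup}| = (nA ^ m.+1)%N.
Proof. by rewrite card_ffun cardA card_ord. Qed.

Lemma var_tot : \sum_(a : Tup) err a <= (nA ^ m.+1)%:R * V.
Proof.
rewrite /err exchange_big /=.
apply: le_trans (_ : \sum_(x <- S0) nA%:R ^+ m.+2 * fA x / m.+1%:R <= _).
  by apply: ler_sum => x _; exact: var_x.
rewrite -mulr_suml -mulr_sumr sum_fA /V natrX natrM.
rewrite le_eqVlt; apply/orP; left; apply/eqP.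
rewrite !exprS; field; by rewrite addrC natr1 pnatr_eq0.
Qed.

Definition Lset : {set Tup} := [set a | err a <= 2 * V].

Lemma markov : 0 < V -> (nA ^ m.+1)%:R <= 2 * (#|Lset|)%:R :> R.
Proof.
move=> V0.
have Hc : (2 * V) *+ #|~: Lset| <= (nA ^ m.+1)%:R * V.
  apply: le_trans var_tot.
  rewrite (bigID (fun a => a \in Lset)) /=.
  apply: le_trans (_ : \sum_(a | a \notin Lset) err a <= _); last first.
    by rewrite lerDr; apply: sumr_ge0 => a _; exact: err_ge0.
  have -> : (2 * V) *+ #|~: Lset| = \sum_(a | a \notin Lset) (2 * V).
    by rewrite -sumr_const; apply: eq_bigl => a; rewrite in_setC.
  apply: ler_sum => a; rewrite inE -ltNge => /ltW; done.
have HC := cardsC Lset; rewrite cardTup in HC.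
have : (2 * #|~: Lset|%:R) * V <= (nA ^ m.+1)%:R * V :> R.
  by rewrite mulrAC mulr_natr.
rewrite ler_pM2r // => H2.
rewrite -HC natrD in H2 *.
lra.
Qed.

Definition sh (a a' : Tup) (t : G) : bool := [forall i, val (a' i) == val (a i) + t].

Lemma shift_bound a a' t : sh a a' t -> shift_sq R A B t <= 2 * err a + 2 * err a'.
Proof.
move=> h.
have Eg x : gA a x = gA a' (x + t).
  rewrite /gA; congr (_ * _); apply: eq_bigr => i _.
  by rewrite (eqP (forallP h i)) opprD addrACA subrr addr0.
rewrite /shift_sq.
set D := (sumset A B `|` _).
apply: le_trans (_ : \sum_(x <- D) (2 * (fA x - gA a x) ^+ 2
    + 2 * (fA (x + t) - gA a' (x + t)) ^+ 2) <= _).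
  apply: ler_sum => x _; rewrite real_normK ?num_real //.
  have : (fA x - fA (x + t)) ^+ 2 <= 2 * (fA x - gA a x) ^+ 2
      + 2 * (fA (x + t) - gA a' (x + t)) ^+ 2.
    rewrite Eg -subr_ge0.
    set u := fA x - gA a' (x + t); set w := fA (x + t) - gA a' (x + t).
    have -> : fA x - fA (x + t) = u - w by rewrite /u /w; ring.
    have -> : 2 * u ^+ 2 + 2 * w ^+ 2 - (u - w) ^+ 2 = (u + w) ^+ 2 by ring.
    exact: sqr_ge0.
  done.
rewrite big_split /= -!mulr_sumr lerD // ler_pM2l //.
  apply: sum_sub_le => [y|y yS]; first exact: sqr_ge0.
  by rewrite fA_supp // gA_supp // subr0 expr0n.
apply: (sum_shift_le D t (F := fun y => (fA y - gA a' y) ^+ 2)).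
  by move=> y; exact: sqr_ge0.
by move=> y yS; rewrite fA_supp // gA_supp // subr0 expr0n.
Qed.

Lemma dmem (x y : A) : val x - val y \in diffset A.
Proof. by apply/imfset2P; exists (fsval x); rewrite ?fsvalP //; exists (fsval y); rewrite ?fsvalP. Qed.

Definition mkd (x y : A) : diffset A := [` dmem x y].
Definition pi (a : Tup) : {ffun 'I_m -> diffset A} :=
  [ffun i => mkd (a (lift ord0 i)) (a ord0)].

Lemma sh_pi_eq a a' t : sh a a' t -> pi a = pi a'.
Proof.
move=> h; apply/ffunP => i; rewrite !ffunE; apply/val_inj => /=.
rewrite (eqP (forallP h (lift ord0 i))) (eqP (forallP h ord0)).
by rewrite opprD addrACA subrr addr0.
Qed.

Lemma pi_sh a a' : pi a = pi a' -> sh a a' (val (a' ord0) - val (a ord0)).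
Proof.
move=> E; apply/forallP => i; case: (unliftP ord0 i) => [l ->|->].
  have := congr1 (fun F : {ffun 'I_m -> diffset A} => val (F l)) E.
  rewrite !ffunE /= => e; apply/eqP.
  by rewrite -[val (a' (lift _ _))](subrK (val (a' ord0))) -e addrAC addrA.
by rewrite addrC subrK.
Qed.

Lemma sh_pi a a' : (\sum_(t <- diffset A) sh a a' t)%N = (pi a == pi a').
Proof.
case: (eqVneq (pi a) (pi a')) => [E|NE].
  rewrite (eq_bigr (fun t => (t == val (a' ord0) - val (a ord0)) : nat)).
    by rewrite sum_eq1 ?fset_uniq // dmem.
  move=> t _; case: (boolP (sh a a' t)) => h.
    have := forallP h ord0 => /eqP ->; by rewrite addrC addKr eqxx.
  case: eqP => // e; by rewrite e pi_sh in h.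
rewrite big1 // => t _; case: (boolP (sh a a' t)) => // /sh_pi_eq e.
by rewrite e eqxx in NE.
Qed.

Definition wL (p : Tup * Tup) : nat := ((p.1 \in Lset) && (p.2 \in Lset)).
Definition sigma t : nat := (\sum_(p : Tup * Tup) wL p * sh p.1 p.2 t)%N.
Definition Pc : nat := (\sum_(p : Tup * Tup) wL p * (pi p.1 == pi p.2))%N.

Lemma Pc_sigma : Pc = (\sum_(t <- diffset A) sigma t)%N.
Proof.
rewrite /Pc /sigma exchange_big /=; apply: eq_bigr => p _.
by rewrite -sh_pi big_distrr.
Qed.

Lemma forall_prod (I : finType) (b : I -> bool) :
  ([forall i, b i] : nat) = (\prod_i (b i : nat))%N.
Proof.
case: (boolP [forall i, b i]) => [/forallP h|/forallPn [i hi]].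
  by rewrite big1 // => i _; rewrite h.
by rewrite (bigD1 i) //= (negbTE hi) mul0n.
Qed.

Lemma sumA_eq1 c : (\sum_(y : A) (val y == c))%N = (c \in A).
Proof. by rewrite -sum_eq1 ?fset_uniq // big_seq_fsetE. Qed.

Lemma sigma_le t : (sigma t <= dcorr A t ^ m.+1)%N.
Proof.
apply: (@leq_trans (\sum_(p : Tup * Tup) sh p.1 p.2 t)).
  by apply: leq_sum => p _; rewrite /wL; case: (_ && _); rewrite ?mul1n ?mul0n.
rewrite -(pair_bigA _ (fun a a' => (sh a a' t : nat))) /=.
have E a : (\sum_(a' : Tup) sh a a' t)%N = (\prod_i (((val (a i) + t)%R) \in A))%N.
  rewrite /sh (eq_bigr (fun a' : Tup => \prod_i ((val (a' i) == (val (a i) + t)%R) : nat))%N); last by move=> a' _; rewrite forall_prod.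
  rewrite -(bigA_distr_bigA (fun i (y : A) => (val y == (val (a i) + t)%R) : nat)).
  by apply: eq_bigr => i _; rewrite sumA_eq1.
under eq_bigr do rewrite E.
rewrite -(bigA_distr_bigA (fun i (y : A) => ((val y + t)%R \in A) : nat)).
rewrite prod_nat_const card_ord dcorr_sum big_seq_fsetE.
done.
Qed.

Lemma CS1 : (#|Lset|%:R) ^+ 2 <= ((#|` diffset A|)%:R) ^+ m * Pc%:R :> R.
Proof.
pose Lc (c : {ffun 'I_m -> diffset A}) : nat :=
  (\sum_(a : Tup) ((a \in Lset) && (pi a == c)))%N.
have h1 : (\sum_c Lc c)%N = #|Lset|.
  rewrite /Lc exchange_big /= -sum1_card [RHS]big_mkcond /=; apply: eq_bigr => a _.
  case: (a \in Lset) => /=; last by rewrite big1.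
  rewrite (bigD1 (pi a)) //= eqxx [X in (_ + X)%N]big1 // => c /negbTE.
  by rewrite eq_sym => ->.
have h2 : (\sum_c Lc c ^ 2)%N = Pc.
  rewrite /Pc -(pair_bigA _ (fun a a' => wL (a, a') * (pi a == pi a'))%N) /=.
  under eq_bigr do rewrite /Lc -mulnn big_distrlr /=.
  rewrite exchange_big /=; apply: eq_bigr => a _.
  rewrite exchange_big /=; apply: eq_bigr => a' _.
  rewrite (bigD1 (pi a)) //= eqxx [X in (_ + X)%N]big1 ?addn0; last first.
    by move=> c /negbTE; rewrite eq_sym => ->; rewrite andbF mul0n.
  rewrite /wL /= andbT [pi a' == _]eq_sym.
  by case: (a \in Lset); case: (a' \in Lset); case: (pi a == pi a').
rewrite -h1 -h2 natr_sum.
have := @CS R _ (index_enum {: {ffun 'I_m -> diffset A}}) (fun _ => 1) (fun c => (Lc c)%:R).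
rewrite /= (eq_bigr (fun c => (Lc c)%:R)); last by move=> c _; rewrite mul1r.
rewrite [\sum_i 1 ^+ 2](eq_bigr (fun c => 1)); last by move=> c _; rewrite expr1n.
rewrite sumr_const card_ffun card_ord -cardfE natrX natr_sum.
move/le_trans; apply; apply: ler_wpM2l; first by rewrite exprn_ge0 // ler0n.
rewrite le_eqVlt; apply/orP; left; apply/eqP; apply: eq_bigr => c _; by rewrite natrX.
Qed.

Definition Tset := [fset t in diffset A | (0 < sigma t)%N].

Lemma CS2 : (Pc%:R) ^+ 2 <= (#|` Tset|)%:R * (energy (2 * m + 2) A)%:R :> R.
Proof.
have := @CS R _ (diffset A) (fun t => ((0 < sigma t)%N : nat)%:R) (fun t => (sigma t)%:R).
have e1 : \sum_(t <- diffset A) ((0 < sigma t)%N : nat)%:R * (sigma t)%:R = Pc%:R :> R.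
  rewrite Pc_sigma natr_sum; apply: eq_bigr => t _.
  by case: (sigma t) => [|s] /=; rewrite ?mul0r ?mul1r.
have e2 : \sum_(t <- diffset A) (((0 < sigma t)%N : nat)%:R) ^+ 2 = (#|` Tset|)%:R :> R.
  rewrite /Tset card_sep natr_sum; apply: eq_bigr => t _.
  by rewrite -natrX; case: (0 < sigma t)%N.
have e3 : \sum_(t <- diffset A) ((sigma t)%:R) ^+ 2 <= (energy (2 * m + 2) A)%:R :> R.
  rewrite /energy natr_sum; apply: ler_sum => t _; rewrite -natrX ler_nat.
  apply: (@leq_trans ((dcorr A t ^ m.+1) ^ 2)).
    by rewrite leq_exp2r // sigma_le.
  by rewrite -expnM (_ : (m.+1 * 2 = 2 * m + 2)%N) //; lia.
rewrite e1 e2 => H; apply: le_trans H _; apply: ler_wpM2l e3.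
exact: ler0n.
Qed.

Lemma Tset_sub : Tset `<=` diffset A.
Proof. by apply/fsubsetP => t; rewrite /Tset !inE /= => /andP []. Qed.

Lemma Tset_good t : t \in Tset -> shift_sq R A B t <= 8 * V.
Proof.
rewrite /Tset !inE /= => /andP [_ hs].
case: (pickP (fun p : Tup * Tup => (0 < wL p * sh p.1 p.2 t)%N)) => [p hp|h0]; last first.
  move: hs; rewrite /sigma big1 // => p _; move: (h0 p) => /=.
  by case: (wL p * _)%N.
move: hp; rewrite muln_gt0 /wL !lt0b => /andP [/andP [h1 h2] hsh].
apply: le_trans (shift_bound hsh) _.
move: h1 h2; rewrite !inE => h1 h2.
have -> : 8 * V = 2 * (2 * V) + 2 * (2 * V) by ring.
by rewrite lerD // ler_pM2l.
Qed.
End Main.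

Lemma final_alg (R : realFieldType) (r n K M l d kk P s E : R) :
  0 < r -> 0 < n -> 0 < K -> 0 < M -> 0 < kk -> 0 <= d -> 0 <= P -> 0 <= s -> 0 <= E ->
  r * n <= 2 * l -> l ^+ 2 <= d * P -> P ^+ 2 <= s * E -> d <= kk * r ->
  E = M * (r ^+ 2 * n ^+ 3) / (kk ^+ 2 * K) -> K * n / (16 * M) <= s.
Proof.
move=> r0 n0 K0 M0 kk0 d0 P0 s0 E0 h1 h2 h3 h4 hE.
have rn0 : 0 <= r * n by rewrite mulr_ge0 // ltW.
have l0 : 0 <= l by have := le_trans rn0 h1; rewrite pmulr_rge0.
have a1 : (r * n) ^+ 2 <= 4 * l ^+ 2.
  have -> : 4 * l ^+ 2 = (2 * l) * (2 * l) by ring.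
  by rewrite expr2 ler_pM.
have a2 : (l ^+ 2) ^+ 2 <= d ^+ 2 * (s * E).
  apply: (le_trans (_ : _ <= (d * P) ^+ 2)).
    by rewrite (expr2 (l ^+ 2)) (expr2 (d * P)) ler_pM // ?exprn_ge0 // mulr_ge0.
  by rewrite exprMn ler_wpM2l // exprn_ge0.
have a3 : d ^+ 2 <= (kk * r) ^+ 2 by rewrite !expr2 ler_pM.
have key : (r * n) ^+ 4 <= 16 * ((kk * r) ^+ 2 * (s * E)).
  apply: (le_trans (_ : _ <= (4 * l ^+ 2) ^+ 2)).
    have -> : (r * n) ^+ 4 = ((r * n) ^+ 2) ^+ 2 by rewrite -exprM.
    by rewrite (expr2 ((r * n) ^+ 2)) (expr2 (4 * l ^+ 2)) ler_pM // ?exprn_ge0.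
  have -> : (4 * l ^+ 2) ^+ 2 = 16 * (l ^+ 2) ^+ 2 by ring.
  rewrite ler_pM2l //; apply: le_trans a2 _; apply: ler_wpM2r => //.
  by rewrite mulr_ge0.
have Kne : K != 0 by rewrite gt_eqF.
have kkne : kk != 0 by rewrite gt_eqF.
have e1 : 16 * ((kk * r) ^+ 2 * (s * E)) = (r ^+ 4 * n ^+ 3) * (16 * s * M / K).
  by rewrite hE; field; rewrite Kne kkne.
have e2 : (r * n) ^+ 4 = (r ^+ 4 * n ^+ 3) * n by ring.
rewrite e1 e2 in key.
rewrite ler_pM2l in key; last by rewrite mulr_gt0 // exprn_gt0.
rewrite ler_pdivlMr // in key.
rewrite ler_pdivrMr ?mulr_gt0 //.
have -> : s * (16 * M) = 16 * s * M by ring.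
by rewrite mulrC.
Qed.

Unset Implicit Arguments.
Theorem theorem20 (G : zmodType) (R : realFieldType) (A B : {fset G})
  (k : nat) (K M : R) :
  A != fset0 -> B != fset0 -> (1 <= k)%N -> 0 < K -> 0 < M ->
  (#|` diffset A|)%:R <= K * (#|` A|)%:R ->
  ((energy (2 * k + 2) A)%:R : R)
    = M * (#|` A|)%:R ^+ (2 * k + 3) / K ^+ (2 * k + 1) ->
  exists (T : {fset G}) (u : G),
    [/\ T `<=` diffset A,
        K * (#|` A|)%:R / (16 * M) <= (#|` T|)%:R &
        forall t, t \in [fset s + u | s in T] ->
          shift_sq R A B t <= 32 * (#|` A|)%:R ^+ 2 * (#|` B|)%:R / k%:R].
Proof.
move=> A0 B0 k1 K0 M0 hD hE.
have n0 : (0 < #|` A|)%N by rewrite cardfs_gt0.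
have b0 : (0 < #|` B|)%N by rewrite cardfs_gt0.
have V0 : 0 < V R A B k.
  by rewrite /V /nA divr_gt0 ?mulr_gt0 ?exprn_gt0 ?ltr0n.
exists (Tset R A B k), 0; split.
- exact: Tset_sub.
- apply: (@final_alg R ((#|` A|)%:R ^+ k) (#|` A|)%:R K M (#|Lset R A B k|)%:R
     ((#|` diffset A|)%:R ^+ k) (K ^+ k) (Pc R A B k)%:R (#|` Tset R A B k|)%:R (energy (2 * k + 2) A)%:R).
  + by rewrite exprn_gt0 // ltr0n.
  + by rewrite ltr0n.
  + done.
  + done.
  + by rewrite exprn_gt0.
  + by rewrite exprn_ge0 // ler0n.
  + exact: ler0n.
  + exact: ler0n.
  + exact: ler0n.
  + by have := markov V0; rewrite /nA natrX exprSr.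
  + exact: CS1.
  + exact: CS2.
  + rewrite -exprMn; apply: lerXn2r; rewrite ?nnegrE ?ler0n //.
    by rewrite mulr_ge0 ?ler0n // ltW.
  + by rewrite hE -!exprM -!exprD -exprSr (mulnC k 2) addn1.
- move=> t /imfsetP [s sT ->]; rewrite addr0.
  apply: le_trans (Tset_good sT) _.
  rewrite /V /nA.
  set c := (#|` A|)%:R ^+ 2 * (#|` B|)%:R.
  have c0 : 0 <= c by rewrite mulr_ge0 ?exprn_ge0 ?ler0n.
  have kp : 0 < k%:R :> R by rewrite ltr0n.
  have -> : 32 * (#|` A|)%:R ^+ 2 * (#|` B|)%:R / k%:R = 32 * c / k%:R by rewrite /c mulrA.
  rewrite ler_pdivlMr //.
  have h : c / k.+1%:R * k%:R <= c.
    rewrite mulrAC ler_pdivrMr ?ltr0n // ler_wpM2l // ler_nat; exact: leqnSn.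
  have : 8 * (c / k.+1%:R * k%:R) <= 8 * c by rewrite ler_pM2l.
  rewrite mulrA => h2; apply: le_trans h2 _.
  by rewrite ler_wpM2r // ler_nat.
Qed.
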